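(* Let $\mathbf k$ be a commutative domain of characteristic zero, let $0\neq\psi(x)=\sum_{j=0}^s b_jx^j\in\mathbf k[x]$, and let $\omega=xy-y\psi(x)$. The following are equivalent: (1) for every commutative Rota-Baxter algebra $(R,P)$ of weight $0$, the $\omega$-cover $\widetilde P$ of $P$ on $R^{\mathbb N}$ (weight-$0$ Hurwitz product) is a Rota-Baxter operator of weight $0$; (2) $\deg\psi=1$ and $b_1=1$, i.e. $\omega=xy-(b_0y+yx)$; (3) for every commutative Rota-Baxter algebra $(R,P)$ of weight $0$ and every $f\in R^{\mathbb N}$, $\widetilde P_0(f)=P(f_0)$ and $\widetilde P_n(f)=b_0\widetilde P_{n-1}(f)+\widetilde P_{n-1}(\partial_Rf)$ for all $n\ge1$. Moreover, when $b_0=0$ in (3), $\widetilde P(f)=(P(f_0),P(f_1),P(f_2),\dots)$.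
   Context: A Rota-Baxter operator of weight $0$ on an algebra $A$ is a $\mathbf{k}$-linear $P$ with $P(x)P(y)=P(P(x)y)+P(xP(y))$. $R^{\mathbb N}$ is the set of sequences $(f_n)_{n\in\mathbb N}$ in $R$ with product $(fg)_n=\sum_{j=0}^n\binom{n}{j}f_{n-j}g_j$, and $(\partial_R f)_n=f_{n+1}$. For $\omega=xy-(\phi(x)+y\psi(x))$ with $\phi=\sum_{i=0}^r a_ix^i$, $\psi=\sum_{j=0}^s b_jx^j$ in $\mathbf k[x]$, the $\omega$-cover $\widetilde P$ of $P$ is the unique linear operator on $R^{\mathbb N}$ with $\widetilde P_0(f)=P(f_0)$ and $\widetilde P_n(f)=\sum_{i=0}^r a_if_{n-1+i}+\sum_{j=0}^s b_j\widetilde P_{n-1}(\partial_R^jf)$ for $n\ge1$, where $\widetilde P_n(f):=\widetilde P(f)_n$ (here $\phi=0$). *)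

(* Defs.v *)
From HB Require Import structures.
From mathcomp Require Import all_boot all_order all_algebra.
Set Implicit Arguments. Unset Strict Implicit. Unset Printing Implicit Defensive.
Import Order.TTheory GRing.Theory Num.Theory.
Local Open Scope ring_scope.

Section Defs.
Variables (k : comNzRingType) (R : comAlgType k).

(* P is a Rota-Baxter operator of weight 0 on R (k-linearity is imposed separately). *)
Definition is_RB0 (P : R -> R) : Prop :=
  forall x y : R, P x * P y = P (P x * y) + P (x * P y).

Definition hurwitz_mul (f g : nat -> R) : nat -> R :=
  fun n => \sum_(j < n.+1) ('C(n, j))%:R * f (n - j)%N * g j.

(* j-fold derivation: (partial_R^j f)_n = f_(n+j) *)
Definition dshift (j : nat) (f : nat -> R) : nat -> R := fun n => f (n + j)%N.

(* omega-cover for omega = xy - (phi(x) + y psi(x)):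
   cover_at phi psi P n f = \tilde P_n(f). *)
Fixpoint cover_at (phi psi : {poly k}) (P : R -> R) (n : nat) (f : nat -> R) : R :=
  match n with
  | 0 => P (f 0%N)
  | m.+1 => \sum_(i < size phi) phi`_i *: f (m + i)%N
            + \sum_(j < size psi) psi`_j *: cover_at phi psi P m (dshift j f)
  end.

Definition omega_cover (phi psi : {poly k}) (P : R -> R) (f : nat -> R) : nat -> R :=
  fun n => cover_at phi psi P n f.
End Defs.

(* Main.v *)
Require Import Defs.
From HB Require Import structures.
From mathcomp Require Import all_boot all_order all_algebra ring zify.
Import Order.TTheory GRing.Theory Num.Theory.
Local Open Scope ring_scope.
Set Implicit Arguments. Unset Strict Implicit. Unset Printing Implicit Defensive.
Section General.
Variables (k : idomainType) (psi : {poly k}) (R : comAlgType k).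

Lemma covS (P : R -> R) n f : cover_at 0 psi P n.+1 f =
  \sum_(j < size psi) psi`_j *: cover_at 0 psi P n (dshift j f).
Proof. by rewrite /= size_poly0 big_ord0 add0r. Qed.

Lemma cov_ext (P : R -> R) n f g : (forall m, f m = g m) ->
  cover_at 0 psi P n f = cover_at 0 psi P n g.
Proof.
elim: n f g => [|n IH] f g fg; first by rewrite /= fg.
rewrite !covS; apply: eq_bigr => j _; congr (_ *: _); apply: IH => m; exact: fg.
Qed.

Lemma cov_lin (P : {linear R -> R}) n f :
  cover_at 0 psi P n f = P (cover_at 0 psi (@idfun R) n f).
Proof.
elim: n f => [|n IH] f //.
rewrite !covS linear_sum; apply: eq_bigr => j _; by rewrite linearZ IH.
Qed.

Local Notation c := (fun n f => cover_at 0 psi (@idfun R) n f).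

Lemma c_add n (u v : nat -> R) : c n (fun m => u m + v m) = c n u + c n v.
Proof.
elim: n u v => [|n IH] u v //.
rewrite !covS -big_split; apply: eq_bigr => j _ /=.
rewrite -scalerDr; congr (_ *: _); exact: IH.
Qed.

Local Notation H := (@hurwitz_mul k R).

Lemma H_ext a a' b b' n : (forall m, a m = a' m) -> (forall m, b m = b' m) ->
  H a b n = H a' b' n.
Proof. by move=> ha hb; apply: eq_bigr => j _; rewrite ha hb. Qed.

Lemma H_comm a b n : H a b n = H b a n.
Proof.
rewrite /hurwitz_mul (reindex_inj rev_ord_inj) /=; apply: eq_bigr => j _.
have hj : (j <= n)%N by rewrite -ltnS ltn_ord.
by rewrite subSS subKn // bin_sub // mulrAC.
Qed.

Lemma H_lin2 a (s : k) u v n :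
  H a (fun j => s *: u j + v j) n = s *: H a u n + H a v n.
Proof.
rewrite /hurwitz_mul scaler_sumr -big_split; apply: eq_bigr => j _.
by rewrite mulrDr scalerAr.
Qed.

Lemma H_leibniz a b n : H a b n.+1 = H (dshift 1 a) b n + H a (dshift 1 b) n.
Proof.
rewrite /hurwitz_mul big_ord_recl.
under eq_bigr => j _ do rewrite binS natrD !mulrDl.
rewrite big_split /= addrA; congr (_ + _); last first.
  by apply: eq_bigr => j _; rewrite /dshift addn1 subSS.
have bump0 i : bump 0 i = i.+1 by [].
rewrite [in RHS]big_ord_recl [X in _ = _ + X](_ : _ = \sum_(i < n)
   ('C(n, i.+1))%:R * a (n - i)%N * b (i.+1)).
- rewrite big_ord_recr /= (bin_small (ltnSn n)) !mul0r addr0.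
  rewrite /dshift !subn0 addn1 !bin0; congr (_ + _).
- apply: eq_bigr => j _; rewrite /dshift lift0 addn1 subnSK //.
Qed.

Lemma cov_rec2 (P : R -> R) n f : size psi = 2%N -> psi`_1 = 1 ->
  cover_at 0 psi P n.+1 f = psi`_0 *: cover_at 0 psi P n f
                            + cover_at 0 psi P n (dshift 1 f).
Proof.
move=> s2 p1; rewrite covS s2 big_ord_recr big_ord1 /= p1 scale1r.
by congr (_ *: _ + _); apply: cov_ext => m; rewrite /dshift addn0.
Qed.

Lemma keyK n a b : size psi = 2%N -> psi`_1 = 1 ->
  c n (H a b) = H a (fun j => c j b) n.
Proof.
move=> s2 p1; elim: n a b => [|n IH] a b; first by rewrite /= /hurwitz_mul !big_ord1.
rewrite cov_rec2 // IH.
rewrite (cov_ext _ _ (g := fun m => H (dshift 1 a) b m + H a (dshift 1 b) m));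
  last by move=> m; rewrite /dshift addn1 H_leibniz.
rewrite c_add !IH H_leibniz.
rewrite (@H_ext a a (dshift 1 (fun j => c j b))
   (fun j => psi`_0 *: c j b + c j (dshift 1 b))) //; last first.
  by move=> m; rewrite /dshift addn1 cov_rec2.
by rewrite H_lin2 addrCA.
Qed.

Lemma cond2_cond1 (P : {linear R -> R}) : size psi = 2%N -> psi`_1 = 1 ->
  is_RB0 P -> forall (f g : nat -> R) (n : nat),
        H (omega_cover 0 psi P f) (omega_cover 0 psi P g) n
        = omega_cover 0 psi P (H (omega_cover 0 psi P f) g) n
          + omega_cover 0 psi P (H f (omega_cover 0 psi P g)) n.
Proof.
move=> s2 p1 hRB f g n; rewrite /omega_cover.
have E h m : cover_at 0 psi P m h = P (c m h) by exact: cov_lin.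
set F := fun j => P (c j f); set G := fun j => P (c j g).
rewrite (@H_ext _ F _ G) //; try by move=> m; rewrite E.
rewrite !E.
have e1 : c n (H (fun j => cover_at 0 psi P j f) g) = c n (H F g).
  by apply: cov_ext => m; apply: H_ext => // i; rewrite E.
have e2 : c n (H f (fun j => cover_at 0 psi P j g)) = c n (H G f).
  by apply: cov_ext => m; rewrite [LHS]H_comm; apply: H_ext => // i; rewrite E.
rewrite e1 e2.
rewrite !keyK // (H_comm G).
rewrite /hurwitz_mul !linear_sum -big_split; apply: eq_bigr => j _ /=.
by rewrite -!mulrA !mulr_natl !raddfMn -mulrnDl /F /G hRB.
Qed.

End General.
Section S. Variable k : idomainType.
Local Notation A := {poly k}.
Record D := Dmk { d0 : A; d1 : A; d2 : A }.
Definition D2t (x : D) : A * A * A := (d0 x, d1 x, d2 x).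
Definition t2D (x : A * A * A) : D := Dmk x.1.1 x.1.2 x.2.
Lemma D2tK : cancel D2t t2D. Proof. by case. Qed.
HB.instance Definition _ := Equality.copy D (can_type D2tK).
HB.instance Definition _ := Choice.copy D (can_type D2tK).
Lemma Dext (x y : D) : d0 x = d0 y -> d1 x = d1 y -> d2 x = d2 y -> x = y.
Proof. by case: x y => ? ? ? [? ? ?] /= -> -> ->. Qed.
Definition dadd x y := Dmk (d0 x + d0 y) (d1 x + d1 y) (d2 x + d2 y).
Definition dopp x := Dmk (- d0 x) (- d1 x) (- d2 x).
Definition dzero := Dmk 0 0 0.
Lemma daddA : associative dadd. Proof. by move=> x y z; apply: Dext => /=; rewrite addrA. Qed.
Lemma daddC : commutative dadd. Proof. by move=> x y; apply: Dext => /=; rewrite addrC. Qed.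
Lemma dadd0 : left_id dzero dadd. Proof. by move=> x; apply: Dext => /=; rewrite add0r. Qed.
Lemma daddN : left_inverse dzero dopp dadd. Proof. by move=> x; apply: Dext => /=; rewrite addNr. Qed.
HB.instance Definition _ := GRing.isZmodule.Build D daddA daddC dadd0 daddN.
Definition dscale (a : k) x := Dmk (a *: d0 x) (a *: d1 x) (a *: d2 x).
Lemma dscaleA a b v : dscale a (dscale b v) = dscale (a * b) v.
Proof. by apply: Dext => /=; rewrite scalerA. Qed.
Lemma dscale1 : left_id 1 dscale. Proof. by move=> x; apply: Dext => /=; rewrite scale1r. Qed.
Lemma dscaleDr : right_distributive dscale +%R.
Proof. by move=> a x y; apply: Dext => /=; rewrite scalerDr. Qed.
Lemma dscaleDl v : {morph dscale^~ v: a b / a + b}.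
Proof. by move=> a b; apply: Dext => /=; rewrite scalerDl. Qed.
HB.instance Definition _ := GRing.Zmodule_isLmodule.Build k D dscaleA dscale1 dscaleDr dscaleDl.
Definition dmul (x y : D) : D :=
  Dmk (d0 x * d0 y) (d0 x * d1 y + d1 x * d0 y)
      (d0 x * d2 y + 2%:R * (d1 x * d1 y) + d2 x * d0 y).
Definition done_ : D := Dmk 1 0 0.
Lemma dmulA : associative dmul.
Proof. by move=> x y z; apply: Dext => /=; ring. Qed.
Lemma dmulC : commutative dmul.
Proof. by move=> x y; apply: Dext => /=; ring. Qed.
Lemma dmul1 : left_id done_ dmul.
Proof. by move=> x; apply: Dext => /=; ring. Qed.
Lemma dmulD : left_distributive dmul +%R.
Proof. by move=> x y z; apply: Dext => /=; ring. Qed.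
Lemma done_neq0 : done_ != 0.
Proof. by apply/eqP => /(congr1 d0) /= /eqP; rewrite oner_eq0. Qed.
HB.instance Definition _ := GRing.Zmodule_isComNzRing.Build D dmulA dmulC dmul1 dmulD done_neq0.
Lemma dscalerAl (a : k) (u v : D) : a *: (u * v) = (a *: u) * v.
Proof. by apply: Dext => /=; rewrite -!mul_polyC; ring. Qed.
HB.instance Definition _ := GRing.Lmodule_isLalgebra.Build k D dscalerAl.
HB.instance Definition _ := GRing.Lalgebra_isComAlgebra.Build k D.
Definition Pd (x : D) : D := Dmk 0 (d0 x) (d1 x).
Lemma Pd_lin : linear Pd.
Proof. move=> a x y; apply: Dext => /=; by rewrite ?scaler0 ?addr0. Qed.
HB.instance Definition _ := GRing.isLinear.Build k D D *:%R Pd Pd_lin.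


Lemma Pd_RB (x y : D) : Pd x * Pd y = Pd (Pd x * y) + Pd (x * Pd y).
Proof. by apply: Dext => /=; ring. Qed.

Lemma d0_sum I (r : seq I) (Pr : pred I) (F : I -> D) :
  d0 (\sum_(i <- r | Pr i) F i) = \sum_(i <- r | Pr i) d0 (F i).
Proof. exact: (big_morph d0 (fun _ _ => erefl) erefl). Qed.
Lemma d1_sum I (r : seq I) (Pr : pred I) (F : I -> D) :
  d1 (\sum_(i <- r | Pr i) F i) = \sum_(i <- r | Pr i) d1 (F i).
Proof. exact: (big_morph d1 (fun _ _ => erefl) erefl). Qed.
Lemma d2_sum I (r : seq I) (Pr : pred I) (F : I -> D) :
  d2 (\sum_(i <- r | Pr i) F i) = \sum_(i <- r | Pr i) d2 (F i).
Proof. exact: (big_morph d2 (fun _ _ => erefl) erefl). Qed.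
Lemma dMn (x : D) n : x *+ n = Dmk (d0 x *+ n) (d1 x *+ n) (d2 x *+ n).
Proof.
elim: n => [|n IH]; first by apply: Dext; rewrite /= ?mulr0n.
by rewrite !mulrS IH.
Qed.
Lemma dHE (a b : nat -> D) m : hurwitz_mul a b m =
  \sum_(j < m.+1) (a (m - j)%N * b j) *+ 'C(m, j).
Proof. by apply: eq_bigr => j _; rewrite -mulrA mulr_natl. Qed.

Variable psi : {poly k}.
Definition Psi (x : A) := \sum_(j < size psi) psi`_j *: x ^+ j.
Lemma PsiX : Psi 'X = psi.
Proof. by rewrite /Psi -[RHS]coefK poly_def. Qed.

Lemma cov_e (x c : A) i :
  cover_at 0 psi (@Pd) i (fun n => Dmk (c * x ^+ n) 0 0) = Dmk 0 (c * Psi x ^+ i) 0.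
Proof.
elim: i c => [|i IH] c; first by rewrite /= !expr0.
rewrite covS.
have E j : cover_at 0 psi (@Pd) i (dshift j (fun n => Dmk (c * x ^+ n) 0 0))
   = Dmk 0 (c * x ^+ j * Psi x ^+ i) 0.
  by rewrite -IH; apply: cov_ext => m; rewrite /dshift exprD mulrA mulrAC.
under eq_bigr => j _ do rewrite E.
apply: Dext; rewrite /= ?d0_sum ?d1_sum ?d2_sum /=.
- by rewrite big1 // => j _; rewrite scaler0.
- rewrite /Psi exprSr mulrA mulr_sumr; apply: eq_bigr => j _.
  by rewrite -!mul_polyC; ring.
- by rewrite big1 // => j _; rewrite scaler0.
Qed.
Lemma H10 (u v : A) j :
  hurwitz_mul (fun n => Dmk 0 (u ^+ n) 0) (fun n => Dmk (v ^+ n) 0 0) j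
  = Dmk 0 ((u + v) ^+ j) 0.
Proof.
rewrite dHE; apply: Dext; rewrite /= ?d0_sum ?d1_sum ?d2_sum /=.
- by rewrite big1 // => i _; rewrite dMn /= mul0r mul0rn.
- rewrite exprDn; apply: eq_bigr => i _; by rewrite dMn /= mul0r add0r.
- by rewrite big1 // => i _; rewrite dMn /= !mulr0 !mul0r !addr0 mul0rn.
Qed.

Lemma cover1 (h : nat -> D) :
  cover_at 0 psi (@Pd) 1 h = \sum_(j < size psi) psi`_j *: Pd (h j).
Proof. by rewrite covS; apply: eq_bigr => j _; rewrite /= /dshift add0n. Qed.

Definition fX : nat -> D := fun n => Dmk (1 * 'X ^+ n) 0 0.

Lemma c3_c2 :
  omega_cover 0 psi (@Pd) fX 1 =
   psi`_0 *: omega_cover 0 psi (@Pd) fX 0 + omega_cover 0 psi (@Pd) (dshift 1 fX) 0 ->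
  size psi = 2%N /\ psi`_1 = 1.
Proof.
rewrite /omega_cover cov_e /= => /(congr1 d1) /=.
rewrite PsiX !mul1r expr1 expr0 add0n expr1 alg_polyC => e.
by rewrite e addrC size_XaddC coefD coefC coefX /= addr0.
Qed.

Lemma c1_c2 (hchar : [pchar k] =i pred0) (hpsi : psi != 0) :
  hurwitz_mul (omega_cover 0 psi (@Pd) fX) (omega_cover 0 psi (@Pd) fX) 1
   = omega_cover 0 psi (@Pd) (hurwitz_mul (omega_cover 0 psi (@Pd) fX) fX) 1
     + omega_cover 0 psi (@Pd) (hurwitz_mul fX (omega_cover 0 psi (@Pd) fX)) 1 ->
  size psi = 2%N /\ psi`_1 = 1.
Proof.
rewrite /omega_cover.
set F := fun n => Dmk 0 (psi ^+ n) 0.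
set g := fun n => Dmk ('X ^+ n) 0 (0 : A).
have EF m : cover_at 0 psi (@Pd) m fX = F m by rewrite cov_e PsiX mul1r.
have Eg m : fX m = g m by rewrite /fX mul1r.
rewrite (H_ext (a' := F) (b' := F)) //.
rewrite (cov_ext _ _ _ (f := hurwitz_mul _ fX) (g := hurwitz_mul F g)); last first.
  by move=> m; apply: H_ext.
rewrite (cov_ext _ _ _ (f := hurwitz_mul fX _) (g := hurwitz_mul F g)); last first.
  by move=> m; rewrite H_comm; apply: H_ext.
rewrite !cover1.
under eq_bigr => j _ do rewrite H10.
rewrite dHE => /(congr1 d2).
have -> : d2 (\sum_(j < 2) (F (1 - j)%N * F j) *+ 'C(1, j)) = psi *+ 2 + psi *+ 2.
  rewrite d2_sum !big_ord_recr big_ord0 /= add0r.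
  by rewrite subn0 subnn expr0 expr1; ring.
have -> : (\sum_(j < size psi) psi`_j *: Pd (Dmk 0 ((psi + 'X)^+j) 0)) = Dmk 0 0 (psi \Po (psi + 'X)).
  apply: Dext; rewrite /= ?d0_sum ?d1_sum ?d2_sum ?comp_polyE.
  - by rewrite big1 // => i _ /=; rewrite scaler0.
  - by rewrite big1 // => i _ /=; rewrite scaler0.
  - by apply: eq_bigr.
rewrite /= => EQ2.
have EQ : psi \Po (psi + 'X) = psi *+ 2.
  have h2 : (2%:R : {poly k}) != 0.
    by rewrite -polyC_natr polyC_eq0; move/pcharf0P: hchar => ->.
  apply/eqP; rewrite -subr_eq0; apply/eqP.
  have : (2%:R : {poly k}) * (psi \Po (psi + 'X) - psi *+ 2) = 0.
    by move: EQ2; rewrite mulrBr !mulr_natl !mulr2n => ->; rewrite subrr.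
  by move/eqP; rewrite mulf_eq0 (negbTE h2) => /eqP.
have hs : (0 < size psi)%N by rewrite size_poly_gt0.
case: (ltngtP (size psi) 2) => hsz.
- have psi0 : psi = (psi`_0)%:P by apply: size1_polyC; rewrite -ltnS.
  move: EQ; rewrite psi0 comp_polyC -psi0 => e.
  have := congr1 (fun x => x - psi) e; rewrite /= mulr2n addrK subrr => e0.
  by move: hpsi; rewrite -e0 eqxx.
- have sq : size (psi + 'X) = size psi by rewrite size_polyDl // size_polyX.
  have hle : (size (psi *+ 2) <= size psi)%N.
    by rewrite mulr2n (leq_trans (size_polyD _ _)) // maxnn.
  have := size_comp_poly psi (psi + 'X); rewrite EQ sq => e.
  exfalso; move: hle hsz e; set d := size psi; set d2 := size (psi *+ 2).
  case: d => [|[|[|d]]] //; case: d2 => [|d2] //= h1 h2 e; nia.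
- move: EQ; rewrite comp_polyE hsz !big_ord_recr big_ord0 /= add0r expr0 expr1 alg_polyC => e.
  have := congr1 (fun p : {poly k} => p`_1) e; rewrite /= coefD !coefZ coefC coefD coefX coefMn /=.
  rewrite add0r => e1.
  have nz : psi`_1 != 0.
    by have := hpsi; rewrite -lead_coef_eq0 lead_coefE hsz.
  split => //.
  have : psi`_1 * (psi`_1 + 1) = psi`_1 * (1 + 1) by rewrite e1 mulr2n mulrDr mulr1.
  by move/(mulfI nz)/addIr.
Qed.
End S.
Unset Implicit Arguments. Set Strict Implicit. Set Printing Implicit Defensive.
Theorem proposition3p5 (k : idomainType) (hchar : [pchar k] =i pred0)
    (psi : {poly k}) (hpsi : psi != 0) :
  let cond1 := forall (R : comAlgType k) (P : {linear R -> R}), is_RB0 P ->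
      forall (f g : nat -> R) (n : nat),
        hurwitz_mul (omega_cover 0 psi P f) (omega_cover 0 psi P g) n
        = omega_cover 0 psi P (hurwitz_mul (omega_cover 0 psi P f) g) n
          + omega_cover 0 psi P (hurwitz_mul f (omega_cover 0 psi P g)) n in
  let cond2 := size psi = 2%N /\ psi`_1 = 1 in
  let cond3 := forall (R : comAlgType k) (P : {linear R -> R}), is_RB0 P ->
      forall f : nat -> R,
        omega_cover 0 psi P f 0%N = P (f 0%N) /\
        (forall n : nat, (1 <= n)%N ->
           omega_cover 0 psi P f n
           = psi`_0 *: omega_cover 0 psi P f n.-1 + omega_cover 0 psi P (dshift 1 f) n.-1) in
  [/\ cond1 <-> cond2, cond2 <-> cond3 &
      (cond3 -> psi`_0 = 0 ->
       forall (R : comAlgType k) (P : {linear R -> R}), is_RB0 P ->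
       forall (f : nat -> R) (n : nat), omega_cover 0 psi P f n = P (f n))].
Proof.
move=> cond1 cond2 cond3.
have h12 : cond1 -> cond2.
  move=> h1; apply: (c1_c2 hchar hpsi); exact: (h1 _ (@Pd k) (@Pd_RB k)).
have h21 : cond2 -> cond1.
  move=> [s2 p1] R P hRB f g n; exact: cond2_cond1.
have h23 : cond2 -> cond3.
  move=> [s2 p1] R P hRB f; split => // -[//|n] _.
  by rewrite /omega_cover cov_rec2.
have h32 : cond3 -> cond2.
  move=> h3; apply: c3_c2; exact: (proj2 (h3 _ (@Pd k) (@Pd_RB k) _) 1%N isT).
split; [by split | by split |].
move=> h3 p0 R P hRB f n; elim: n f => [|n IH] f; first by [].
have [_ h] := h3 R P hRB f.
by rewrite h // p0 scale0r add0r /= IH /dshift addn1.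
Qed.
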